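(* Let $\varphi_1$ and $\varphi_2$ be two $\mathbb{T}$-gains on a connected graph $G$ with $n$ vertices and $m$ edges. Let $T$ be a normal spanning tree of $G$ and let $\overrightarrow{C_j(T)}$, $j=1,\dots,m-n+1$, be the directed fundamental cycles in the suitably oriented graph $\overrightarrow{G_T}$. Then $\varphi_1(\overrightarrow{C_j(T)})=\varphi_2(\overrightarrow{C_j(T)})$ for all $j=1,\dots,m-n+1$ if and only if $\varphi_1(\overrightarrow{C})=\varphi_2(\overrightarrow{C})$ for every cycle $C$ of $G$ (with $\overrightarrow{C}$ a directed version of $C$).
   Context: Graphs are finite, simple and undirected. $\mathbb{T}=\{z\in\mathbb{C}:|z|=1\}$. Each edge $e_{st}$ of $G$ gives two oriented edges $\overrightarrow{e_{st}}$ and $\overrightarrow{e_{ts}}$. A $\mathbb{T}$-gain on $G$ is a map $\varphi$ from the set of oriented edges to $\mathbb{T}$ with $\varphi(\overrightarrow{e_{ts}})=\varphi(\overrightarrow{e_{st}})^{-1}$; $\Phi=(G,\varphi)$ is then a $\mathbb{T}$-gain graph. The gain of a directed cycle $v_1\to v_2\to\cdots\to v_k\to v_1$ is $\varphi(\overrightarrow{e_{12}})\varphi(\overrightarrow{e_{23}})\cdots\varphi(\overrightarrow{e_{k1}})$; the two directions of a cycle have conjugate gains. A rooted spanning tree $T$ with root $v_r$ induces the tree order: $v_x\le v_y$ iff $v_x$ lies on the path in $T$ from $v_r$ to $v_y$. $T$ is a normal spanning tree if any two adjacent vertices of $G$ are comparable in the tree order. The suitably oriented graph $\overrightarrow{G_T}$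 orients each edge $e_{st}$ with $v_s\le v_t$ as $\overrightarrow{e_{st}}$ if $e_{st}\in E(T)$ and as $\overrightarrow{e_{ts}}$ if $e_{st}\notin E(T)$. Each of the $m-n+1$ edges not in $T$ creates a unique cycle with $T$ (a fundamental cycle $C_j(T)$); in $\overrightarrow{G_T}$ each fundamental cycle is a directed cycle, denoted $\overrightarrow{C_j(T)}$ (the directed fundamental cycles). *)

(* Defs.v *)
From mathcomp Require Import all_boot all_order all_algebra.
Set Implicit Arguments. Unset Strict Implicit. Unset Printing Implicit Defensive.
Import Order.TTheory GRing.Theory Num.Theory.
Local Open Scope ring_scope.

Definition simple_graph (V : finType) (adj : rel V) :=
  symmetric adj /\ irreflexive adj.

Definition graph_connected (V : finType) (adj : rel V) :=
  forall x y : V, connect adj x y.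

(* A cycle of a graph (given as the cyclic sequence of its distinct vertices,
   which also fixes one of its two directions): at least 3 distinct vertices,
   consecutive ones (cyclically) adjacent. *)
Definition is_cycle (V : finType) (adj : rel V) (c : seq V) :=
  ucycle adj c /\ (3 <= size c)%N.

Definition spanning_tree (V : finType) (adj T : rel V) :=
  [/\ subrel T adj, symmetric T, graph_connected T &
      forall c : seq V, ~ is_cycle T c].

Definition tree_le (V : finType) (T : rel V) (r x y : V) :=
  exists p : seq V, [/\ path T r p, uniq (r :: p), last r p = y & x \in r :: p].

Definition normal_spanning_tree (V : finType) (adj T : rel V) (r : V) :=
  spanning_tree adj T /\
  forall x y, adj x y -> tree_le T r x y \/ tree_le T r y x.

(* A T-gain: phi u v is the gain of the oriented edge u -> v. *)
Definition Tgain (C : numClosedFieldType) (V : finType) (adj : rel V)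
  (phi : V -> V -> C) :=
  forall u v, adj u v -> `|phi u v| = 1 /\ phi v u = (phi u v)^-1.

Definition cycle_gain (C : numClosedFieldType) (V : finType)
  (phi : V -> V -> C) (c : seq V) : C :=
  \prod_(e <- zip c (rot 1 c)) phi e.1 e.2.

(* Main.v *)
Require Import Defs.
From mathcomp Require Import all_boot all_order all_algebra.
From mathcomp Require Import zify ring.
Import Order.TTheory GRing.Theory Num.Theory.
Local Open Scope ring_scope.
Section Gen.
Variables (C : numClosedFieldType) (V : finType).

Definition pgain (psi : V -> V -> C) (x : V) (p : seq V) : C :=
  \prod_(e <- zip (belast x p) p) psi e.1 e.2.

Lemma pgain_nil psi x : pgain psi x [::] = 1.
Proof. by rewrite /pgain big_nil. Qed.

Lemma pgain_cons psi x y p : pgain psi x (y :: p) = psi x y * pgain psi y p.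
Proof. by rewrite /pgain /= big_cons. Qed.

Lemma pgain_cat psi x p1 p2 :
  pgain psi x (p1 ++ p2) = pgain psi x p1 * pgain psi (last x p1) p2.
Proof.
elim: p1 x => [|y p1 IH] x /=; first by rewrite pgain_nil mul1r.
by rewrite !pgain_cons IH mulrA.
Qed.

Lemma cycle_gain_pgain psi x q :
  cycle_gain psi (x :: q) = pgain psi x (rcons q x).
Proof. by rewrite /cycle_gain /pgain rot1_cons belast_rcons. Qed.

Lemma split_nuniq (s : seq V) : ~~ uniq s ->
  exists s1 z s2 s3, s = s1 ++ z :: s2 ++ z :: s3.
Proof.
elim: s => [|y s IH] //=; rewrite negb_and negbK.
case: (boolP (y \in s)) => [ys _ | _ /= /IH [s1 [z [s2 [s3 ->]]]]].
  by case/splitPr: ys => s2 s3; exists [::], y, s2, s3.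
by exists (y :: s1), z, s2, s3.
Qed.

Section CW.
Variables (T : rel V) (psi : V -> V -> C).
Hypothesis hinv : forall u v, T u v -> psi u v * psi v u = 1.
Hypothesis hirr : irreflexive T.
Hypothesis hacyc : forall c : seq V, ~ is_cycle T c.

Lemma closed_walk_gain n x p : (size p <= n)%N -> path T x p -> last x p = x ->
  pgain psi x p = 1.
Proof.
elim: n x p => [|n IH] x p.
  by case: p => // _ _ _; rewrite pgain_nil.
case/lastP: p => [|q y]; first by rewrite pgain_nil.
rewrite last_rcons => hs hp hy; subst y.
have hs' : (size q <= n)%N by move: hs; rewrite size_rcons.
case: (boolP (uniq (x :: q))) => hu.
  case: q hs hs' hp hu => [|y [|z q]] hs hs' hp hu.
  - by move: hp => /=; rewrite hirr.
  - move: hp => /= /andP [hxy /andP [hyx _]].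
    by rewrite !pgain_cons pgain_nil mulr1 hinv.
  - exfalso; apply: (hacyc (x :: y :: z :: q)); split => //.
    by rewrite /ucycle hu andbT.
have [s1 [z [s2 [s3 E]]]] := split_nuniq _ hu.
move: hp hs; case: s1 E => [|w s1] /= [-> ->] hp hs.
- have E1 : rcons (s2 ++ z :: s3) z = rcons s2 z ++ rcons s3 z.
    by rewrite rcons_cat cat_rcons.
  move: hp hs; rewrite E1 cat_path last_rcons => /andP [h1 h2].
  rewrite size_cat /= !size_rcons => hs.
  rewrite pgain_cat last_rcons (IH z (rcons s2 z)) ?(IH z (rcons s3 z)) ?mulr1 //.
  + by rewrite size_rcons; lia.
  + by rewrite last_rcons.
  + by rewrite size_rcons; lia.
  + by rewrite last_rcons.
- have E : rcons (s1 ++ z :: s2 ++ z :: s3) w =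
      rcons s1 z ++ (rcons s2 z ++ rcons s3 w).
    by rewrite !cat_rcons rcons_cat /= rcons_cat.
  move: hp hs; rewrite E !cat_path !last_rcons => /and3P [h1 h2 h3].
  rewrite !size_cat !size_rcons => hs.
  rewrite !pgain_cat !last_rcons (IH z (rcons s2 z)) ?mul1r; last first.
  + by rewrite last_rcons.
  + by [].
  + by rewrite size_rcons; lia.
  have := pgain_cat psi w (rcons s1 z) (rcons s3 w); rewrite last_rcons => <-.
  rewrite (IH w) //.
  + by rewrite size_cat !size_rcons; lia.
  + by rewrite cat_path h1 last_rcons h3.
  + by rewrite last_cat !last_rcons.
Qed.
End CW.
End Gen.
Arguments pgain {C V}.
Arguments pgain_nil {C V}.
Arguments pgain_cons {C V}.
Arguments pgain_cat {C V}.
Arguments cycle_gain_pgain {C V}.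
Arguments closed_walk_gain {C V T psi}.

Lemma gain_nz (C : numClosedFieldType) (V : finType) (adj : rel V)
  (phi : V -> V -> C) u v : Tgain adj phi -> adj u v -> phi u v != 0.
Proof.
move=> g /g [h _]; apply/eqP => h0; move: h; rewrite h0 normr0 => /eqP.
by rewrite eq_sym oner_eq0.
Qed.

Arguments gain_nz {C V adj phi u v}.

Lemma gain_split (C : numClosedFieldType) (V : finType) (adj : rel V)
  (phi1 phi2 : V -> V -> C) x p :
  Tgain adj phi2 -> path adj x p ->
  pgain phi1 x p = pgain (fun u v => phi1 u v / phi2 u v) x p * pgain phi2 x p
  /\ pgain phi2 x p != 0.
Proof.
move=> g2; elim: p x => [|y p IH] x /=.
  by rewrite !pgain_nil mul1r oner_eq0.
move=> /andP [hxy /IH [e ne]].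
have nz := gain_nz g2 hxy.
rewrite !pgain_cons e mulf_neq0 // mulrACA divfK //.
Qed.

Arguments gain_split {C V adj} phi1 {phi2 x p}.

Theorem theorem3p1 (C : numClosedFieldType) (V : finType) (adj : rel V)
  (phi1 phi2 : V -> V -> C) (T : rel V) (r : V) :
  simple_graph adj -> graph_connected adj ->
  Tgain adj phi1 -> Tgain adj phi2 ->
  normal_spanning_tree adj T r ->
  (forall (s t : V) (p : seq V),
     adj s t -> ~~ T s t -> tree_le T r s t ->
     path T s p -> uniq (s :: p) -> last s p = t ->
     cycle_gain phi1 (s :: p) = cycle_gain phi2 (s :: p))
  <->
  (forall c : seq V, is_cycle adj c -> cycle_gain phi1 c = cycle_gain phi2 c).
Proof.
move=> [adjsym adjirr] _ g1 g2 [[hTsub hTsym hTconn hTacyc] hnorm].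
split; last first.
  move=> Hall s t p hst nT _ hp hu hl; apply: Hall; split.
    rewrite /ucycle hu andbT /= rcons_path (sub_path hTsub hp) hl /=.
    by rewrite adjsym.
  case: p hp hu hl => [|y [|z q]] //= hp hu hl.
    by move: hst; rewrite hl adjirr.
  by move: hp nT; rewrite hl => /andP [-> _].
move=> Hfund.
pose psi u v := phi1 u v / phi2 u v.
have hinv : forall u v, adj u v -> psi u v * psi v u = 1.
  move=> u v huv; have nz1 := gain_nz g1 huv; have nz2 := gain_nz g2 huv.
  rewrite /psi (proj2 (g1 u v huv)) (proj2 (g2 u v huv)).
  by field; rewrite nz1 nz2.
have closed1 : forall x p, path adj x p ->
    pgain phi1 x (rcons p x) = pgain phi2 x (rcons p x) ->
    adj (last x p) x -> pgain psi x (rcons p x) = 1.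
  move=> x p hp e hl.
  have hp' : path adj x (rcons p x) by rewrite rcons_path hp hl.
  have [e1 nz] := gain_split phi1 g2 hp'.
  apply: (mulIf nz); by rewrite mul1r -e1 e.
have hTinv : forall u v, T u v -> psi u v * psi v u = 1.
  by move=> u v /hTsub; apply: hinv.
have hTirr : irreflexive T.
  by move=> u; apply/negP => /hTsub; rewrite adjirr.
have CW := closed_walk_gain hTinv hTirr hTacyc.
have F : forall s t, adj s t -> ~~ T s t -> tree_le T r s t ->
    exists b, [/\ path T s b, last s b = t & pgain psi s b * psi t s = 1].
  move=> s t hst nT htl; have [w [hw hwu hwl hsw]] := htl.
  move: hw hwu hwl; case/splitPl: hsw => p1 p2 hl1.
  rewrite cat_path hl1 last_cat hl1 => /andP [_ hp2] hu hl2.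
  have hu2 : uniq (s :: p2).
    rewrite /=; move: hu; rewrite -cat_cons cat_uniq => /and3P [_ hn ->]; rewrite andbT.
    apply/negP => hs; move/negP: hn; apply; apply/hasP; exists s => //.
    by rewrite -hl1 mem_last.
  have := Hfund s t p2 hst nT htl hp2 hu2 hl2.
  rewrite !cycle_gain_pgain => e.
  have := closed1 s p2 (sub_path hTsub hp2) e.
  rewrite hl2 adjsym => /(_ hst).
  rewrite -cats1 pgain_cat pgain_cons pgain_nil mulr1 hl2 => e'.
  by exists p2.
have E : forall u v, adj u v ->
    exists q, [/\ path T u q, last u q = v & pgain psi u q = psi u v].
  move=> u v huv; case: (boolP (T u v)) => hT.
    by exists [:: v]; rewrite /= hT pgain_cons pgain_nil mulr1.
  have hvu : adj v u by rewrite adjsym.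
  case: (hnorm u v huv) => htl.
    have [b [hb hl e]] := F u v huv hT htl.
    exists b; split => //.
    by rewrite -[LHS]mulr1 -(hinv v u hvu) mulrA e mul1r.
  have nT' : ~~ T v u by rewrite hTsym.
  have [b [hb hl e]] := F v u hvu nT' htl.
  case/connectP: (hTconn u v) => q0 hq0 hl0.
  exists q0; split => //.
  have cw : pgain psi u (q0 ++ b) = 1.
    apply: (CW (size (q0 ++ b))) => //.
    - by rewrite cat_path hq0 -hl0 hb.
    - by rewrite last_cat -hl0 hl.
  move: cw; rewrite pgain_cat -hl0 => cw.
  by rewrite -[LHS]mulr1 -e mulrA cw mul1r.
have W : forall x p, path adj x p -> exists q,
    [/\ path T x q, last x q = last x p & pgain psi x q = pgain psi x p].
  move=> x p; elim: p x => [|y p IH] x /=.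
    by move=> _; exists [::].
  move=> /andP [hxy /IH [q2 [h2 l2 e2]]].
  have [q1 [h1 l1 e1]] := E x y hxy.
  exists (q1 ++ q2); split.
  - by rewrite cat_path h1 l1.
  - by rewrite last_cat l1.
  - by rewrite pgain_cat l1 e1 e2 pgain_cons.
move=> [|x q] [hc hsz] //.
rewrite !cycle_gain_pgain.
have hp : path adj x (rcons q x) by case/andP: hc.
have [e1 _] := gain_split phi1 g2 hp.
rewrite e1; suff -> : pgain psi x (rcons q x) = 1 by rewrite mul1r.
have [q' [hq' hl' e']] := W x _ hp.
rewrite -e'; apply: (CW (size q')) => //.
by rewrite hl' last_rcons.
Qed.
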